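(* Let $\beta_\gamma$ be the bundle event structure with events $\{a,b,c\}$ (distinct), conflict $a\#b$ (and $b\#a$), and the single bundle $\{a,b\}\mapsto c$; its configurations are $\emptyset,\{a\},\{b\},\{a,c\},\{b,c\}$. Then there is no GES $\gamma$ with $\mathcal{C}(\gamma)=\mathcal{C}(\beta_\gamma)$.
   Context: A bundle event structure (BES) is $\beta=(E,\#,\mapsto)$ with $\#\subseteq E^2$ irreflexive and symmetric, $\mapsto\subseteq 2^E\times E$, satisfying stability: if $X\mapsto e$ then $e_1\#e_2$ for all distinct $e_1,e_2\in X$. Its traces are finite sequences $e_1\cdots e_n$ of pairwise distinct events, pairwise not in conflict, such that $X\mapsto e_i$ implies $X\cap\{e_1,\ldots,e_{i-1}\}\neq\emptyset$; its configurations $\mathcal{C}(\beta)$ are the event sets of its traces. A GES is $\gamma=(E,\#,\to,\lhd)$ with $\#\subseteq E^2$ irreflexive symmetric, $\to\subseteq E^2$, $\lhd\subseteq E^3$ with $(c,m,t)\in\lhd$ (''$m$ adds cause $c$ to $t$'') implying $\neg(c\to t)$. $\mathrm{ic}(e)=\{e'\mid e'\to e\}$, $\mathrm{ac}(H,e)=\{e'\mid\exists a\in H.(e',a,e)\in\lhd\}$. $X\to_g Y$ iff $X\subseteq Y\subseteq E$, $Y$ conflict-free, $\mathrm{ic}(e)\cup\mathrm{ac}(X,e)\subseteq X$ for all $e\in Y\setminus X$, and for all $t,m\in Y\setminus X$, $c\in E$: $(c,m,t)\in\lhd\Rightarrow c\in X$. $\mathcal{C}(\gamma)$ is the set of subsets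 of $E$ reachable from $\emptyset$ by finitely many $\to_g$-transitions. *)

(* Defs.v *)
(* sets over an event universe U are predicates U -> Prop. *)
From Stdlib Require Import List.
Import ListNotations.

Record BES (U : Type) := mkBES {
  bE : U -> Prop;
  bconf : U -> U -> Prop;
  bbundle : (U -> Prop) -> U -> Prop
}.
Arguments bE {U}. Arguments bconf {U}. Arguments bbundle {U}.

Definition bes_wf {U} (b : BES U) : Prop :=
  (forall x y, bconf b x y -> bE b x /\ bE b y) /\
  (forall x, ~ bconf b x x) /\
  (forall x y, bconf b x y -> bconf b y x) /\
  (forall X e, bbundle b X e -> bE b e /\ forall x, X x -> bE b x) /\
  (forall X e, bbundle b X e -> forall e1 e2, X e1 -> X e2 -> e1 <> e2 -> bconf b e1 e2).

Definition bes_trace {U} (b : BES U) (t : list U) : Prop :=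
  NoDup t /\
  (forall x, In x t -> bE b x) /\
  (forall x y, In x t -> In y t -> ~ bconf b x y) /\
  (forall i e, nth_error t i = Some e ->
     forall X, bbundle b X e -> exists x, X x /\ In x (firstn i t)).

Definition bes_config {U} (b : BES U) (X : U -> Prop) : Prop :=
  exists t, bes_trace b t /\ forall x, X x <-> In x t.

Record GES (U : Type) := mkGES {
  gE : U -> Prop;
  gconf : U -> U -> Prop;
  gcause : U -> U -> Prop;
  gadd : U -> U -> U -> Prop         (* gadd c m t : m adds cause c to t *)
}.
Arguments gE {U}. Arguments gconf {U}. Arguments gcause {U}. Arguments gadd {U}.

Definition ges_wf {U} (g : GES U) : Prop :=
  (forall x y, gconf g x y -> gE g x /\ gE g y) /\
  (forall x, ~ gconf g x x) /\
  (forall x y, gconf g x y -> gconf g y x) /\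
  (forall x y, gcause g x y -> gE g x /\ gE g y) /\
  (forall c m t, gadd g c m t -> gE g c /\ gE g m /\ gE g t) /\
  (forall c m t, gadd g c m t -> ~ gcause g c t).

Definition ic {U} (g : GES U) (e : U) : U -> Prop := fun e' => gcause g e' e.
Definition ac {U} (g : GES U) (H : U -> Prop) (e : U) : U -> Prop :=
  fun e' => exists a, H a /\ gadd g e' a e.

Definition ges_step {U} (g : GES U) (X Y : U -> Prop) : Prop :=
  (forall x, X x -> Y x) /\
  (forall x, Y x -> gE g x) /\
  (forall x y, Y x -> Y y -> ~ gconf g x y) /\
  (forall e, Y e -> ~ X e -> forall e', (ic g e e' \/ ac g X e e') -> X e') /\
  (forall t m c, Y t -> ~ X t -> Y m -> ~ X m -> gE g c -> gadd g c m t -> X c).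

Inductive ges_config {U} (g : GES U) : (U -> Prop) -> Prop :=
| ges_config_empty : forall Y, (forall x, ~ Y x) -> ges_config g Y
| ges_config_step : forall X Y, ges_config g X -> ges_step g X Y -> ges_config g Y.

Definition beta_gamma {U} (a b c : U) : BES U :=
  mkBES U (fun x => x = a \/ x = b \/ x = c)
          (fun x y => (x = a /\ y = b) \/ (x = b /\ y = a))
          (fun X e => e = c /\ forall x, X x <-> (x = a \/ x = b)).

(* Main.v *)
Require Import Defs.
From Stdlib Require Import List Classical.
Import ListNotations.

Lemma inv {U} (g : GES U) : ges_wf g -> forall Y, ges_config g Y -> forall e, Y e ->
  gE g e /\ (forall e', gcause g e' e -> Y e') /\ ~ gcause g e e /\
  (forall x, gadd g x e e -> Y x /\ x <> e).
Proof.
  intros wf Y H. induction H as [Y HY|X Y HX IH Hs]; intros e He.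
  - exfalso; exact (HY e He).
  - destruct Hs as (Hsub & HE & Hcf & Hc & Ha).
    destruct (classic (X e)) as [Xe|nXe].
    + destruct (IH e Xe) as (h1 & h2 & h3 & h4).
      split; [auto|split; [|split; [auto|]]].
      * intros z hz; apply Hsub; apply h2; auto.
      * intros z hz. destruct (h4 z hz). split; auto.
    + assert (Hic : forall e', gcause g e' e -> X e') by
        (intros e' h; apply (Hc e He nXe); left; exact h).
      split; [auto|split; [|split]].
      * intros e' h. apply Hsub; auto.
      * intros h. apply nXe. auto.
      * intros z hz. assert (X z).
        { apply (Ha e e z He nXe He nXe); auto.
          destruct wf as (_&_&_&_&w&_). apply (w _ _ _ hz). }
        split; auto. intros ->. contradiction.
Qed.

Theorem lemma11 (U : Type) (a b c : U) (hab : a <> b) (hac : a <> c) (hbc : b <> c) :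
  ~ exists g : GES U, ges_wf g /\
      forall X : U -> Prop, ges_config g X <-> bes_config (beta_gamma a b c) X.
Proof.
  intros [g [wf Hg]].
  assert (Hac : ges_config g (fun x => x = a \/ x = c)).
  { apply Hg. exists [a; c]. split.
    - repeat split.
      + constructor. simpl. intros [h|[]]; auto. constructor; [simpl; tauto|constructor].
      + intros x [h|[h|[]]]; simpl; subst; auto.
      + intros x y hx hy [[-> ->]|[-> ->]]; simpl in *; intuition congruence.
      + intros [|[|i]] e h X [-> hX]; simpl in h.
        * inversion h; congruence.
        * exists a. split; [apply hX; auto|simpl; auto].
        * destruct i; discriminate.
    - simpl. intros x; intuition. }
  assert (Hbc : ges_config g (fun x => x = b \/ x = c)).
  { apply Hg. exists [b; c]. split.
    - repeat split.
      + constructor. simpl. intros [h|[]]; auto. constructor; [simpl; tauto|constructor].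
      + intros x [h|[h|[]]]; simpl; subst; auto.
      + intros x y hx hy [[-> ->]|[-> ->]]; simpl in *; intuition congruence.
      + intros [|[|i]] e h X [-> hX]; simpl in h.
        * inversion h; congruence.
        * exists b. split; [apply hX; auto|simpl; auto].
        * destruct i; discriminate.
    - simpl. intros x; intuition. }
  destruct (inv g wf _ Hac c (or_intror eq_refl)) as (Ec & ic1 & nc1 & ad1).
  destruct (inv g wf _ Hbc c (or_intror eq_refl)) as (_ & ic2 & _ & ad2).
  destruct (classic (exists e', gcause g e' c)) as [[e' h]|n1].
  { destruct (ic1 _ h) as [->| ->]; [destruct (ic2 _ h)|]; congruence. }
  destruct (classic (exists x, gadd g x c c)) as [[x h]|n2].
  { destruct (ad1 _ h) as [[->| ->] n]; [destruct (ad2 _ h) as [[?|?] _]|]; congruence. }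
  assert (Hc : ges_config g (fun x => x = c)).
  { apply (ges_config_step g (fun _ => False)).
    - apply ges_config_empty; auto.
    - repeat split.
      + intros x [].
      + intros x ->; auto.
      + intros x y -> ->. destruct wf as (_&w&_). apply w.
      + intros e -> _ e' [h|[a0 [[] _]]]. apply n1; eauto.
      + intros t m c0 -> _ -> _ _ h. apply n2; eauto. }
  apply Hg in Hc. destruct Hc as [t [[_ [_ [_ Hb]]] Ht]].
  destruct (In_nth_error t c (proj1 (Ht c) eq_refl)) as [i hi].
  destruct (Hb i c hi (fun x => x = a \/ x = b)) as [x [hx hin]].
  - split; auto. intros; tauto.
  - assert (In x t) as hx2.
    { rewrite <- (firstn_skipn i t). apply in_or_app. left; exact hin. }
    apply Ht in hx2. destruct hx as [-> | ->]; congruence.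
Qed.
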